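(* Let $G=G_{(X,I)}=(Q,A,E)$ be a $d$-dim PNS with $J=[1,d]\setminus I$. For all $p\in Q$ and $x,y\in\mathbb{N}^J$: $(p,x)\dashrightarrow^*(p,y)$ in $G$ if and only if $y-x\in(A_{SC}^G)_\Delta^*$ (i.e., $x\dashrightarrow^* y$ in the net $A_{SC}^G$). Moreover, $\|A_{SC}^G\|\leq\|A\|\cdot|Q|$.
   Context: A $d$-dim Petri net $A$ is a finite set of actions $(a_-,a_+)\in\mathbb{N}^d\times\mathbb{N}^d$, with $\Delta(a)=a_+-a_-$ and $\|A\|$ the maximal entry of all $a_-,a_+$; for an action sequence $\sigma=a_1\cdots a_k$, $\Delta(\sigma)=\sum_j\Delta(a_j)$. $A$ is conservative if some $w\in(\mathbb{N}_+)^d$ satisfies $\langle\Delta(a),w\rangle=0$ for all $a$. Steps: $x\xrightarrow{a}y$ iff $x=c+a_-$, $y=c+a_+$, $c\in\mathbb{N}^d$; a bottom SCC is a nonempty set $X$ of configurations with $\{y\mid x\xrightarrow{*}y\}=X$ for all $x\in X$. For $I\subseteq[1,d]$, $x|_I$ denotes restriction to $I$ and $A|_I$ the net with actions $((a_-)|_I,(a_+)|_I)$. A $d$-dim PNS is $G=G_{(X,I)}=(Q,A,E)$ where $A$ is a conservative $d$-dim net, $X$ a bottom SCC of $A$, $I\subseteq[1,d]$, $Q=\{x|_I\mid x\in X\}$, and $E=\{(p,a,q)\in Q\times A\times Q\mid p\xrightarrow{a}q\text{ in }A|_I\}$. Configurations of $G$ are pairs $(p,x)$, $p\in Q$, $x\in\mathbb{N}^J$.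 Virtual reachability in $G$: $(p,x)\dashrightarrow^*(q,y)$ iff there is a path from $p$ to $q$ in the labelled graph $(Q,A,E)$ labelled by some $\sigma$ with $\Delta(\sigma)|_J=y-x$. The $|J|$-dim net $A_{SC}^G$ has, for each $z$ in the set of displacements $\Delta(\sigma)|_J$ of simple cycles (labelled $\sigma$) of the graph $(Q,A,E)$, the action $(z_-,z_+)$ where $z_+=\max(z,\mathbf{0})$ and $z_-=\max(-z,\mathbf{0})$ componentwise; $(A_{SC}^G)_\Delta^*$ is the set of finite sums of these displacements $z$. *)

(* Defs.v *)
From HB Require Import structures.
From Stdlib Require Import Relations.Relation_Operators.
From mathcomp Require Import all_boot all_order all_algebra.
Set Implicit Arguments. Unset Strict Implicit. Unset Printing Implicit Defensive.
Import Order.TTheory GRing.Theory Num.Theory.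
Local Open Scope ring_scope.

(* Vectors in N^d and Z^d, indexed by 'I_d (coordinates 0..d-1 stand for 1..d). *)
Definition vec (d : nat) := {ffun 'I_d -> nat}.
Definition ivec (d : nat) := {ffun 'I_d -> int}.
(* An action (a_-, a_+): a.1 = a_-, a.2 = a_+. A net is a finite set (seq) of actions. *)
Definition act (d : nat) := (vec d * vec d)%type.

Definition vadd d (x y : vec d) : vec d := [ffun i => (x i + y i)%N].
Definition toZ d (x : vec d) : ivec d := [ffun i => (x i)%:Z].

Definition Delta d (a : act d) : ivec d := toZ a.2 - toZ a.1.
Definition DeltaSeq d (s : seq (act d)) : ivec d := \sum_(a <- s) Delta a.

Definition normA d (A : seq (act d)) : nat :=
  \max_(a <- A) \max_(i < d) maxn (a.1 i) (a.2 i).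

Definition step d (A : seq (act d)) (x y : vec d) : Prop :=
  exists a, a \in A /\ exists c : vec d, x = vadd c a.1 /\ y = vadd c a.2.
Definition reach d (A : seq (act d)) : vec d -> vec d -> Prop :=
  clos_refl_trans (vec d) (step A).

Definition conservative d (A : seq (act d)) : Prop :=
  exists w : 'I_d -> nat, (forall i, (0 < w i)%N) /\
    forall a, a \in A -> \sum_(i < d) Delta a i * (w i)%:Z = 0.

Definition bottomSCC d (A : seq (act d)) (X : vec d -> Prop) : Prop :=
  (exists x, X x) /\ forall x, X x -> forall y, reach A x y <-> X y.

(* Restriction x|_I, represented as the vector padded by 0 outside I. *)
Definition restr d (I : {set 'I_d}) (x : vec d) : vec d :=
  [ffun i => if i \in I then x i else 0%N].
Definition restrZ d (J : {set 'I_d}) (z : ivec d) : ivec d :=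
  [ffun i => if i \in J then z i else 0].
Definition restrA d (I : {set 'I_d}) (a : act d) : act d := (restr I a.1, restr I a.2).

Definition inQ d (X : vec d -> Prop) (I : {set 'I_d}) (p : vec d) : Prop :=
  exists x, X x /\ p = restr I x.

Definition stepI d (I : {set 'I_d}) (p : vec d) (a : act d) (q : vec d) : Prop :=
  exists c : vec d, p = vadd c (restrA I a).1 /\ q = vadd c (restrA I a).2.

Definition edge d (A : seq (act d)) (X : vec d -> Prop) (I : {set 'I_d})
  (p : vec d) (a : act d) (q : vec d) : Prop :=
  inQ X I p /\ a \in A /\ inQ X I q /\ stepI I p a q.

(* A path from p in the graph (Q,A,E): list of (label, next vertex). *)
Fixpoint gpath d (A : seq (act d)) (X : vec d -> Prop) (I : {set 'I_d})
  (p : vec d) (s : seq (act d * vec d)) : Prop :=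
  match s with
  | [::] => True
  | (a, q) :: s' => edge A X I p a q /\ gpath A X I q s'
  end.

Definition pend d (p : vec d) (s : seq (act d * vec d)) : vec d := last p (map snd s).
Definition labels d (s : seq (act d * vec d)) : seq (act d) := map fst s.

Definition vreach d (A : seq (act d)) (X : vec d -> Prop) (I : {set 'I_d})
  (p : vec d) (x : vec d) (q : vec d) (y : vec d) : Prop :=
  exists s, gpath A X I p s /\ pend p s = q /\
    restrZ (~: I) (DeltaSeq (labels s)) = toZ y - toZ x.

Definition simple_cycle d (A : seq (act d)) (X : vec d -> Prop) (I : {set 'I_d})
  (p : vec d) (s : seq (act d * vec d)) : Prop :=
  s <> [::] /\ gpath A X I p s /\ pend p s = p /\ uniq (map snd s).

Definition SCdisp d (A : seq (act d)) (X : vec d -> Prop) (I : {set 'I_d}) (z : ivec d) : Prop :=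
  exists p s, simple_cycle A X I p s /\ z = restrZ (~: I) (DeltaSeq (labels s)).

Definition pospart d (z : ivec d) : vec d := [ffun i => `|Num.max (z i) 0|%N].
Definition negpart d (z : ivec d) : vec d := [ffun i => `|Num.max (- z i) 0|%N].

(* the net A_SC^G (coordinates outside J are 0) *)
Definition inASC d (A : seq (act d)) (X : vec d -> Prop) (I : {set 'I_d}) (a : act d) : Prop :=
  exists z, SCdisp A X I z /\ a = (negpart z, pospart z).

Definition DeltaStarASC d (A : seq (act d)) (X : vec d -> Prop) (I : {set 'I_d}) (v : ivec d) : Prop :=
  exists sigma : seq (act d), (forall a, a \in sigma -> inASC A X I a) /\ v = DeltaSeq sigma.

(* x in N^J : zero on I *)
Definition onJ d (I : {set 'I_d}) (x : vec d) : Prop := forall i, i \in I -> x i = 0%N.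

(* Main.v *)
Require Import Defs.
From mathcomp Require Import all_boot all_order all_algebra.
From mathcomp Require Import zify ring.
From Stdlib Require Import Classical Relations.Relation_Operators.
Set Implicit Arguments. Unset Strict Implicit. Unset Printing Implicit Defensive.
Import Order.TTheory GRing.Theory Num.Theory.
Local Open Scope ring_scope.

Section Aux.
Variable d : nat.
Implicit Types (A : seq (act d)) (X : vec d -> Prop) (I : {set 'I_d}).

Lemma gpath_cat A X I p s1 s2 :
  gpath A X I p (s1 ++ s2) <-> gpath A X I p s1 /\ gpath A X I (pend p s1) s2.
Proof.
elim: s1 p => [|[a q] s1 IH] p /=; first by tauto.
rewrite IH /pend /=; tauto.
Qed.

Lemma pend_cat (p : vec d) s1 s2 : pend p (s1 ++ s2) = pend (pend p s1) s2.
Proof. by rewrite /pend map_cat last_cat. Qed.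

Lemma DeltaSeq_cat (s1 s2 : seq (act d * vec d)) :
  DeltaSeq (labels (s1 ++ s2)) = DeltaSeq (labels s1) + DeltaSeq (labels s2).
Proof. by rewrite /DeltaSeq /labels map_cat big_cat. Qed.

Lemma DeltaSeq_cons (a : act d) s : DeltaSeq (a :: s) = Delta a + DeltaSeq s.
Proof. by rewrite /DeltaSeq big_cons. Qed.

Lemma restrZD I (u v : ivec d) : restrZ I (u + v) = restrZ I u + restrZ I v.
Proof. apply/ffunP => i; rewrite !ffunE; by case: (i \in I); rewrite ?addr0. Qed.

Lemma restrZ0 I : restrZ I (0 : ivec d) = 0.
Proof. apply/ffunP => i; rewrite !ffunE; by case: (i \in I). Qed.

Lemma Delta_np (z : ivec d) : Delta (negpart z, pospart z) = z.
Proof. apply/ffunP => i; rewrite /Delta /= !ffunE; lia. Qed.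


Lemma restr_vadd I (x y : vec d) : restr I (vadd x y) = vadd (restr I x) (restr I y).
Proof. apply/ffunP => i; rewrite !ffunE; by case: (i \in I). Qed.

Lemma run_proj A X I x y : bottomSCC A X -> X x -> reach A x y ->
  exists s, gpath A X I (restr I x) s /\ pend (restr I x) s = restr I y /\
    DeltaSeq (labels s) = toZ y - toZ x.
Proof.
move=> [_ HB] Xx H; elim: H Xx => {x y} [x y Hst|x|x y z Hxy IH1 Hyz IH2] Xx.
- have Xy : X y by apply/(HB x Xx); apply: rt_step.
  case: Hst => a [aA [c [ex ey]]].
  exists [:: (a, restr I y)]; split; [|split] => //=.
  + split=> //; split; first by exists x.
    split=> //; split; first by exists y.
    exists (restr I c); rewrite ex ey !restr_vadd; done.
  + rewrite /labels /= DeltaSeq_cons /DeltaSeq big_nil addr0 /Delta ex ey.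
    by apply/ffunP => i; rewrite !ffunE /= !PoszD opprD addrACA subrr add0r.
- exists (@nil (act d * vec d)); split; first done. split; first done.
  by rewrite /labels /DeltaSeq big_nil subrr.
- have Xy : X y by apply/(HB x Xx).
  have [s1 [g1 [e1 D1]]] := IH1 Xx.
  have [s2 [g2 [e2 D2]]] := IH2 Xy.
  exists (s1 ++ s2); split; [|split].
  + by apply/gpath_cat; rewrite e1.
  + by rewrite pend_cat e1.
  + rewrite DeltaSeq_cat D1 D2; apply/ffunP => i; by rewrite !ffunE addrC addrA subrK.
Qed.

Lemma split_nonuniq (s : seq (act d * vec d)) : ~~ uniq (map snd s) ->
  exists s1 e1 s2 e2 s3, s = s1 ++ e1 :: s2 ++ e2 :: s3 /\ e1.2 = e2.2.
Proof.
elim: s => [|e s IH] //=; rewrite negb_and negbK; case/orP.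
- case/mapP => e2 He2 Ee; case/splitPr: He2 => s2 s3.
  by exists [::], e, s2, e2, s3.
- move/IH => [s1 [e1 [s2 [e2 [s3 [-> E]]]]]].
  by exists (e :: s1), e1, s2, e2, s3.
Qed.


Lemma DeltaSeq_cat' (s1 s2 : seq (act d)) :
  DeltaSeq (s1 ++ s2) = DeltaSeq s1 + DeltaSeq s2.
Proof. by rewrite /DeltaSeq big_cat. Qed.

Lemma pend_cons (p : vec d) e s : pend p (e :: s) = pend e.2 s.
Proof. by []. Qed.

Lemma DeltaSeq_nil : DeltaSeq (@nil (act d)) = 0.
Proof. by rewrite /DeltaSeq big_nil. Qed.

Lemma decomp A X I n p s : (size s <= n)%N -> gpath A X I p s -> pend p s = p ->
  exists sigma, (forall a, a \in sigma -> inASC A X I a) /\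
    restrZ (~: I) (DeltaSeq (labels s)) = DeltaSeq sigma.
Proof.
elim: n p s => [|n IH] p s.
  rewrite leqn0 => /nilP -> _ _; exists [::]; split=> //.
  by rewrite /labels /= DeltaSeq_nil restrZ0.
move=> Hs Hg He.
case: (altP (s =P [::])) => [->|Hne].
  exists [::]; split=> //.
  by rewrite /labels /= DeltaSeq_nil restrZ0.
case: (boolP (uniq (map snd s))) => Hu.
  set z := restrZ (~: I) (DeltaSeq (labels s)).
  exists [:: (negpart z, pospart z)]; split.
    move=> a; rewrite inE => /eqP ->; exists z; split=> //.
    by exists p, s; split=> //; split=> //; apply/eqP.
  by rewrite DeltaSeq_cons DeltaSeq_nil addr0 Delta_np.
have [s1 [[a1 q1] [s2 [[a2 q2] [s3 [Es /= Eq]]]]]] := split_nonuniq Hu.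
subst s q2.
move: Hg => /gpath_cat [g1 /= [ed1 /gpath_cat [g2 /= [ed2 g3]]]].
move: Hs; rewrite !size_cat /= size_cat /= => Hs.
have [so [Ho Do]] : exists sigma, (forall a, a \in sigma -> inASC A X I a) /\
    restrZ (~: I) (DeltaSeq (labels (s1 ++ (a1, q1) :: s3))) = DeltaSeq sigma.
  apply: (IH p).
  - rewrite size_cat /=; lia.
  - by apply/gpath_cat; split=> //=.
  - by move: He; rewrite !pend_cat !pend_cons /= pend_cat pend_cons.
have [sm [Hm Dm]] : exists sigma, (forall a, a \in sigma -> inASC A X I a) /\
    restrZ (~: I) (DeltaSeq (labels (s2 ++ [:: (a2, q1)]))) = DeltaSeq sigma.
  apply: (IH q1).
  - rewrite size_cat /=; lia.
  - by apply/gpath_cat; split=> //=.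
  - by rewrite pend_cat.
exists (so ++ sm); split.
  by move=> a; rewrite mem_cat => /orP [/Ho|/Hm].
rewrite DeltaSeq_cat' -Do -Dm -restrZD; congr restrZ.
rewrite /labels !(map_cat, map_cons, DeltaSeq_cat', DeltaSeq_cons) DeltaSeq_nil.
apply/ffunP => i; rewrite !ffunE; lia.
Qed.


Lemma build A X I p sigma : bottomSCC A X -> inQ X I p ->
  (forall a, a \in sigma -> inASC A X I a) ->
  exists s, gpath A X I p s /\ pend p s = p /\
    restrZ (~: I) (DeltaSeq (labels s)) = DeltaSeq sigma.
Proof.
move=> HB [x0 [Xx0 ->]]; elim: sigma => [|a sigma IH] Hs.
  exists [::]; split; first done. split; first done.
  by rewrite /labels /= DeltaSeq_nil restrZ0.
have [s' [g' [e' D']]] : exists s, gpath A X I (restr I x0) s /\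
   pend (restr I x0) s = restr I x0 /\
    restrZ (~: I) (DeltaSeq (labels s)) = DeltaSeq sigma.
  by apply: IH => b Hb; apply: Hs; rewrite inE Hb orbT.
have [z [[q [C [[Cne [gC [eC uC]]] Ez]]] Ea]] := Hs a (mem_head _ _).
have [xq [Xxq Eqq]] : inQ X I q.
  by case: C Cne gC {eC uC Ez} => [|[a0 q0] C] //= _ [[]].
subst q.
have Hr1 : reach A x0 xq by apply/(HB.2 x0 Xx0).
have Hr2 : reach A xq x0 by apply/(HB.2 xq Xxq).
have [R1 [g1 [e1 D1]]] := run_proj I HB Xx0 Hr1.
have [R2 [g2 [e2 D2]]] := run_proj I HB Xxq Hr2.
exists (R1 ++ C ++ R2 ++ s'); split; [|split].
- apply/gpath_cat; split=> //; rewrite e1.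
  apply/gpath_cat; split=> //; rewrite eC.
  by apply/gpath_cat; split=> //; rewrite e2.
- by rewrite !pend_cat e1 eC e2 e'.
- rewrite DeltaSeq_cons -D' Ea Delta_np Ez /labels !map_cat !DeltaSeq_cat'.
  rewrite -!/(labels _) D1 D2.
  apply/ffunP => i; rewrite !ffunE; case: (i \in ~: I); [ring | by rewrite addr0].
Qed.

Lemma gpath_mem A X I p s : gpath A X I p s ->
  forall e, e \in s -> e.1 \in A /\ inQ X I e.2.
Proof.
elim: s p => [|[a q] s IH] p //= [[_ [aA [Hq _]]] g] e.
rewrite inE => /orP [/eqP -> //|]; exact: IH g e.
Qed.

Lemma sumz (F : 'I_d -> nat) : ((\sum_i F i)%N)%:Z = \sum_i (F i)%:Z.
Proof. by apply: (big_morph Posz PoszD). Qed.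

Definition weight (w : 'I_d -> nat) (x : vec d) := (\sum_i x i * w i)%N.

Lemma step_weight A w x y : (forall a, a \in A -> \sum_(i < d) Delta a i * (w i)%:Z = 0) ->
  step A x y -> weight w x = weight w y.
Proof.
move=> Hw [a [aA [c [-> ->]]]].
apply/eqP; rewrite -eqz_nat /weight !sumz; apply/eqP/esym/eqP.
rewrite -subr_eq0 -sumrB; apply/eqP; apply: (@etrans _ _ (\sum_(i < d) Delta a i * (w i)%:Z)); last exact: Hw a aA.
apply: eq_bigr => i _.
rewrite /Delta !ffunE /= !PoszM !PoszD; ring.
Qed.

Lemma reach_weight A w x y : (forall a, a \in A -> \sum_(i < d) Delta a i * (w i)%:Z = 0) ->
  reach A x y -> weight w x = weight w y.
Proof.
move=> Hw; elim=> {x y} [x y /(step_weight Hw)|//|x y z _ -> _ ->] //.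
Qed.

Lemma le_weight w (x : vec d) i : (0 < w i)%N -> (x i <= weight w x)%N.
Proof.
move=> wp; rewrite /weight (bigD1 i) //=.
apply: leq_trans (leq_addr _ _); exact: leq_pmulr.
Qed.

Lemma cfilter (T : eqType) (P : T -> Prop) (L : seq T) :
  exists Qs, uniq Qs /\ forall p, p \in Qs <-> (p \in L /\ P p).
Proof.
elim: L => [|a L [Qs [uQ HQ]]].
  by exists [::]; split=> // p; split=> // [[]].
case: (classic (P a /\ a \notin Qs)) => [[Pa naQ]|H].
  exists (a :: Qs); split; first by rewrite /= naQ.
  move=> p; rewrite in_cons [p \in a :: L]in_cons; split.
    case/orP => [/eqP ->|/HQ [pL Pp]]; first by rewrite eqxx.
    by rewrite pL orbT.
  case=> /orP [/eqP ->|pL] Pp; first by rewrite eqxx.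
  by apply/orP; right; apply/HQ.
exists Qs; split=> // p; rewrite in_cons; split.
  by move/HQ => [pL Pp]; rewrite pL orbT.
case=> /orP [/eqP ->|pL] Pp; last by apply/HQ.
by case: (boolP (a \in Qs)) => // aQ; exfalso; apply: H.
Qed.

Lemma DeltaSeq_bound A (s : seq (act d)) i : (forall a, a \in s -> a \in A) ->
  (`|DeltaSeq s i|%N <= normA A * size s)%N.
Proof.
elim: s => [|a s IH] Hs; first by rewrite DeltaSeq_nil ffunE.
have aA := Hs a (mem_head _ _).
have IH' := IH (fun b Hb => Hs b (mem_behead (s := a :: s) Hb)).
have Hm : (maxn (a.1 i) (a.2 i) <= normA A)%N.
  apply: leq_trans (leq_bigmax (F := fun i => maxn (a.1 i) (a.2 i)) i) _.
  exact: (leq_bigmax_seq (F := fun a : act d => \max_(i < d) maxn (a.1 i) (a.2 i)) a aA isT).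
rewrite DeltaSeq_cons /Delta !ffunE /= mulnS.
move: IH' Hm; lia.
Qed.

End Aux.

Lemma absmax (t : int) n : (`|t|%N <= n)%N -> (`|Num.max t 0|%N <= n)%N.
Proof. lia. Qed.

Theorem proposition15 (d : nat) (A : seq (act d)) (X : vec d -> Prop) (I : {set 'I_d}) :
  conservative A -> bottomSCC A X ->
  (forall p x y : vec d, inQ X I p -> onJ I x -> onJ I y ->
     (vreach A X I p x p y <-> DeltaStarASC A X I (toZ y - toZ x)))
  /\
  (exists Qs : seq (vec d), uniq Qs /\ (forall p, p \in Qs <-> inQ X I p) /\
     forall a, inASC A X I a -> forall i,
       (a.1 i <= normA A * size Qs)%N /\ (a.2 i <= normA A * size Qs)%N).
Proof.
move=> [w [wpos Hw]] HB; split.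
  move=> p x y Hp _ _; split.
    case=> s [g [e D]].
    have [sigma [Hs E]] := decomp (leqnn (size s)) g e.
    by exists sigma; split=> //; rewrite -D E.
  case=> sigma [Hs E].
  have [s [g [e D]]] := build HB Hp Hs.
  by exists s; split=> //; split=> //; rewrite D E.
have [[x0 Xx0] HB2] := HB.
pose N := weight w x0.
have Hbound : forall p, inQ X I p -> forall i, (p i <= N)%N.
  move=> p [x [Xx ->]] i; rewrite ffunE; case: (i \in I) => //.
  have -> : N = weight w x by apply: (reach_weight Hw); apply/(HB2 x0 Xx0).
  exact: le_weight.
pose L := [seq ([ffun i => nat_of_ord (f i)] : vec d) | f : {ffun 'I_d -> 'I_N.+1} <- enum {ffun 'I_d -> 'I_N.+1}].
have [Qs [uQ HQ]] := cfilter (inQ X I) L.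
have HQ' : forall p, p \in Qs <-> inQ X I p.
  move=> p; split; first by case/HQ.
  move=> Hp; apply/HQ; split=> //.
  apply/mapP; exists [ffun i => (inord (p i) : 'I_N.+1)]; first by rewrite mem_enum.
  apply/ffunP => i; rewrite !ffunE inordK //; rewrite ltnS; exact: Hbound.
exists Qs; split=> //; split=> //.
move=> a [z [[q [C [[Cne [gC [eC uC]]] Ez]]] ->]] i /=.
have Hsz : (size C <= size Qs)%N.
  rewrite -(size_map snd C); apply: uniq_leq_size uC _ => q' /mapP [e eC' ->].
  by apply/HQ'; case: (gpath_mem gC eC').
have Hz : (`|z i|%N <= normA A * size Qs)%N.
  apply: (@leq_trans (normA A * size C)); last exact: leq_mul (leqnn _) Hsz.
  rewrite Ez ffunE; case: (i \in ~: I) => //.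
  rewrite -(size_map fst C); apply: DeltaSeq_bound => b /mapP [e eC' ->].
  by case: (gpath_mem gC eC').
rewrite !ffunE; split; apply: absmax => //; by rewrite abszN.
Qed.
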